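(* Let $k\geq 2$ be an integer, $n=rk$ with $r>2$ an integer, and $e=\lceil r/2\rceil-1$. Let $V_i=\{u+\eta_i u^q\gamma^{l_i}\mid u\in\mathbb{F}_{q^k}\}$, $i=1,\dots,e(q-1)$, where $\eta_i\in G$ and $1\le l_i\le e$. Then the code $\mathcal{C}=\bigcup_{i=1}^{e(q-1)}\{\alpha V_i\mid \alpha\in\mathbb{F}_{q^n}^*\}$ is a cyclic constant dimension subspace code with cardinality $e(q^n-1)$ and minimum distance $2k-2$.
   Context: $q$ is a prime power, $\mathbb{F}_{q^n}$ is the extension of degree $n$ of $\mathbb{F}_q$. The subspace distance is $d(U,V)=\dim U+\dim V-2\dim(U\cap V)$; a code is cyclic if it is a union of orbits $\{\alpha U\mid\alpha\in\mathbb{F}_{q^n}^*\}$. Let $\xi$ be a primitive element of $\mathbb{F}_{q^k}$ and $G=\mathbb{F}_{q^k}^*/\langle\xi^{q-1}\rangle$, a cyclic group of order $q-1$ (elements of $G$ used via fixed coset representatives in $\mathbb{F}_{q^k}^*$). Let $\gamma$ be a root of an irreducible polynomial of degree $r$ over $\mathbb{F}_{q^k}$. The $V_i$ are indexed by the $e(q-1)$ distinct pairs $(\eta_i,l_i)\in G\times\{1,\dots,e\}$. *)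

(* Defs.v *)
From HB Require Import structures.
From mathcomp Require Import all_boot all_order all_algebra all_field.
Set Implicit Arguments. Unset Strict Implicit. Unset Printing Implicit Defensive.
Import GRing.Theory.
Local Open Scope ring_scope.

Definition subspace_dist (F0 : fieldType) (L : fieldExtType F0) (U V : {vspace L}) : nat :=
  (\dim U + \dim V - 2 * \dim (U :&: V))%N.

Definition scalev (F0 : fieldType) (L : fieldExtType F0) (a : L) (V : {vspace L}) : {vspace L} :=
  (amull a @: V)%VS.

Definition irreducible_over (F0 : fieldType) (L : fieldExtType F0) (K : {subfield L}) (p : {poly L}) : Prop :=
  [/\ p \is a polyOver K, (1 < size p)%N &
      forall d : {poly L}, d \is a polyOver K -> d %| p -> size d = 1%N \/ (d %= p)].

(* V = { u + eta u^q gamma^l | u in K }, written as the F0-span of the image of a basis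
   (the map is F_q-linear; the main theorem also states the set equality). *)
Definition Vsp (F0 : fieldType) (L : fieldExtType F0) (K : {subfield L}) (q : nat)
  (eta gamma : L) (l : nat) : {vspace L} :=
  <<[seq (u + eta * u ^+ q * gamma ^+ l)%R | u <- vbasis K]>>%VS.

(* Main.v *)
Require Import Defs.
From HB Require Import structures.
From mathcomp Require Import all_boot all_order all_algebra all_field.
From mathcomp Require Import ring zify.
Set Implicit Arguments. Unset Strict Implicit. Unset Printing Implicit Defensive.
Import GRing.Theory.
Local Open Scope ring_scope.
Section Frob.
Variables (F0 : finFieldType) (L : fieldExtType F0).

Lemma mem1_frob (x : L) : reflect (x ^+ #|F0| = x) (x \in 1%VS).
Proof.
  apply: (iffP (vlineP _ _)) => [[a ->] | xFx].
    by rewrite -in_algE -[LHS]rmorphXn expf_card.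
  pose q := map_poly (in_alg L) ('X^#|F0| - 'X).
  have: root q x.
    rewrite /q rmorphB /= map_polyXn map_polyX.
    by rewrite rootE !(hornerE, hornerXn) xFx subrr.
  have{q} ->: q = \prod_(z <- [seq b%:A | b : F0]) ('X - z%:P).
    rewrite /q finField_genPoly rmorph_prod big_image /=.
    by apply: eq_bigr => b _; rewrite rmorphB /= map_polyX map_polyC.
  by rewrite root_prod_XsubC => /mapP[a]; exists a.
Qed.

Lemma frobD (x y : L) : (x + y) ^+ #|F0| = x ^+ #|F0| + y ^+ #|F0|.
Proof.
  have [p _ pcharFp] := finPcharP F0; rewrite (card_pprimeChar pcharFp).
  elim: (logn _ _) => [|n IHn]; first by rewrite !expr1.
  rewrite expnSr !exprM {}IHn.
  by rewrite -(pchar_lalg L) in pcharFp; rewrite -!(pFrobenius_autE pcharFp) rmorphD.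
Qed.

Lemma frobZ (c : F0) (x : L) : (c *: x) ^+ #|F0| = c *: x ^+ #|F0|.
Proof.
  by rewrite -mulr_algl exprMn -[in LHS]in_algE -rmorphXn expf_card mulr_algl.
Qed.

Definition fV (eta gamma : L) (l : nat) (u : L) : L := u + eta * u ^+ #|F0| * gamma ^+ l.

Lemma fV_is_linear eta gamma l : linear (fV eta gamma l).
Proof.
  move=> c x y; rewrite /fV frobD frobZ.
  rewrite mulrDr mulrDl -scalerAr -scalerAl scalerDr -!addrA; congr (_ + _).
  by rewrite addrC -!addrA [y + _]addrC.
Qed.

HB.instance Definition _ eta gamma l := GRing.isSemilinear.Build F0 L L _ (fV eta gamma l)
  (GRing.semilinear_linear (fV_is_linear eta gamma l)).

Lemma VspE (K : {subfield L}) eta gamma l :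
  Vsp K #|F0| eta gamma l = (linfun (fV eta gamma l) @: K)%VS.
Proof.
  have -> : (linfun (fV eta gamma l) @: K)%VS = (linfun (fV eta gamma l) @: <<vbasis K>>)%VS.
    by rewrite (span_basis (vbasisP K)).
  rewrite limg_span /Vsp.
  congr (span _); apply: eq_map => u; by rewrite lfunE.
Qed.

Lemma mem_scalev (a x : L) (W : {vspace L}) :
  reflect (exists2 w, w \in W & x = a * w) (x \in scalev a W).
Proof.
  rewrite /scalev; apply: (iffP memv_imgP) => -[w Hw ->]; exists w => //; by rewrite lfunE.
Qed.


Lemma scalevM (a b : L) (W : {vspace L}) : scalev a (scalev b W) = scalev (a * b) W.
Proof.
  apply/vspaceP => x; apply/mem_scalev/mem_scalev.
    by case=> y /mem_scalev[w Hw ->] ->; exists w => //; rewrite mulrA.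
  by case=> w Hw ->; exists (b * w); [apply/mem_scalev; exists w | rewrite mulrA].
Qed.

Lemma dim_scalev (a : L) (W : {vspace L}) : a != 0 -> \dim (scalev a W) = \dim W.
Proof.
  move=> a0; rewrite /scalev limg_dim_eq //.
  by rewrite (eqP (lker0_amull _)) ?capv0 ?unitfE.
Qed.

Lemma mul1v (c w : L) (W : {vspace L}) : c \in 1%VS -> w \in W -> c * w \in W.
Proof. by case/vlineP=> a ->; rewrite mulr_algl => Hw; rewrite memvZ. Qed.

Lemma scalev1 (c : L) (W : {vspace L}) : c \in 1%VS -> c != 0 -> scalev c W = W.
Proof.
  move=> c1 c0; apply/vspaceP => x; apply/mem_scalev/idP.
    by case=> w Hw ->; apply: mul1v.
  move=> Hx; exists (c^-1 * x); last by rewrite mulrA mulfV // mul1r.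
  by apply: mul1v => //; rewrite memvV.
Qed.


Lemma Q_gt1 : (1 < #|F0|)%N. Proof. exact: finNzRing_gt1. Qed.
End Frob.
Section Indep.
Variables (F0 : finFieldType) (L : fieldExtType F0) (K : {subfield L}) (gamma : L) (r : nat).

Lemma adj_deg p : irreducible_over K p -> size p = r.+1 -> root p gamma ->
  adjoin_degree K gamma = r.
Proof.
  case=> Kp _ irr sp rp.
  have md := minPoly_dvdp Kp rp.
  case: (irr _ (minPolyOver K gamma) md) => [|/eqp_size]; rewrite size_minPoly //.
  by rewrite sp => -[].
Qed.

Hypothesis Hdeg : adjoin_degree K gamma = r.

Lemma indep_poly (P : {poly L}) : P \is a polyOver K -> (size P <= r)%N -> P.[gamma] = 0 -> P = 0.
Proof.
  move=> KP sP P0; apply/eqP; rewrite -(root_small_adjoin_poly (x:=gamma) KP) ?Hdeg //.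
  exact/rootP.
Qed.

Lemma sizeZX (a : L) i : (size (a *: 'X^i) <= i.+1)%N.
Proof. by rewrite (leq_trans (size_scale_leq _ _)) // size_polyXn. Qed.

Lemma KZX (a : L) i : a \in K -> a *: 'X^i \is a polyOver K.
Proof. by move=> Ka; rewrite polyOverZ // rpredX // polyOverX. Qed.

Lemma indep4 (a b c d : L) (i j h : nat) :
  a \in K -> b \in K -> c \in K -> d \in K ->
  (0 < i < j)%N -> (j < h < r)%N ->
  a + b * gamma ^+ i + c * gamma ^+ j + d * gamma ^+ h = 0 ->
  [/\ a = 0, b = 0, c = 0 & d = 0].
Proof.
  move=> Ka Kb Kc Kd /andP[i0 ij] /andP[jh hr] E.
  pose P := a%:P + b *: 'X^i + c *: 'X^j + d *: 'X^h.
  have P0 : P = 0.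
    apply: indep_poly.
    - by rewrite /P !rpredD ?polyOverC ?KZX.
    - rewrite /P; apply: (leq_trans (size_polyD _ _)); rewrite geq_max.
      rewrite (leq_trans (sizeZX _ _)) // andbT.
      apply: (leq_trans (size_polyD _ _)); rewrite geq_max.
      rewrite (leq_trans (sizeZX _ _)) ?andbT; last by lia.
      apply: (leq_trans (size_polyD _ _)); rewrite geq_max.
      rewrite (leq_trans (sizeZX _ _)) ?andbT; last by lia.
      by rewrite (leq_trans (size_polyC_leq1 _)) //; lia.
    - by rewrite /P !hornerE.
  have cf t : P`_t = 0 by rewrite P0 coef0.
  have e1 : (0 == i)%N = false by apply/eqP; lia.
  have e2 : (0 == j)%N = false by apply/eqP; lia.
  have e3 : (0 == h)%N = false by apply/eqP; lia.
  have e4 : (i == j)%N = false by apply/eqP; lia.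
  have e5 : (i == h)%N = false by apply/eqP; lia.
  have e6 : (j == h)%N = false by apply/eqP; lia.
  have e7 : (j == i)%N = false by apply/eqP; lia.
  have e8 : (h == i)%N = false by apply/eqP; lia.
  have e9 : (h == j)%N = false by apply/eqP; lia.
  have := cf 0%N; have := cf i; have := cf j; have := cf h.
  rewrite /P !coefD !coefZ !coefXn !coefC !eqxx e1 e2 e3 e4 e5 e6 e7 e8 e9.
  have -> : (i == 0)%N = false by apply/eqP; lia.
  have -> : (j == 0)%N = false by apply/eqP; lia.
  have -> : (h == 0)%N = false by apply/eqP; lia.
  by rewrite !mulr0 !mulr1 !addr0 !add0r => -> -> -> ->.
Qed.

Lemma indep3 (a b d : L) (i h : nat) :
  a \in K -> b \in K -> d \in K ->
  (0 < i < h)%N -> (h < r)%N ->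
  a + b * gamma ^+ i + d * gamma ^+ h = 0 ->
  [/\ a = 0, b = 0 & d = 0].
Proof.
  move=> Ka Kb Kd /andP[i0 ih] hr E.
  pose P := a%:P + b *: 'X^i + d *: 'X^h.
  have P0 : P = 0.
    apply: indep_poly.
    - by rewrite /P !rpredD ?polyOverC ?KZX.
    - rewrite /P; apply: (leq_trans (size_polyD _ _)); rewrite geq_max.
      rewrite (leq_trans (sizeZX _ _)) // andbT.
      apply: (leq_trans (size_polyD _ _)); rewrite geq_max.
      rewrite (leq_trans (sizeZX _ _)) ?andbT; last by lia.
      by rewrite (leq_trans (size_polyC_leq1 _)) //; lia.
    - by rewrite /P !hornerE.
  have cf t : P`_t = 0 by rewrite P0 coef0.
  have e1 : (0 == i)%N = false by apply/eqP; lia.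
  have e3 : (0 == h)%N = false by apply/eqP; lia.
  have e5 : (i == h)%N = false by apply/eqP; lia.
  have e8 : (h == i)%N = false by apply/eqP; lia.
  have := cf 0%N; have := cf i; have := cf h.
  rewrite /P !coefD !coefZ !coefXn !coefC !eqxx e1 e3 e5 e8.
  have -> : (i == 0)%N = false by apply/eqP; lia.
  have -> : (h == 0)%N = false by apply/eqP; lia.
  by rewrite !mulr0 !mulr1 !addr0 !add0r => -> -> ->.
Qed.

Lemma indep2 (a b : L) (i : nat) :
  a \in K -> b \in K -> (0 < i < r)%N -> a + b * gamma ^+ i = 0 -> a = 0 /\ b = 0.
Proof.
  move=> Ka Kb /andP[i0 ir] E.
  pose P := a%:P + b *: 'X^i.
  have P0 : P = 0.
    apply: indep_poly.
    - by rewrite /P !rpredD ?polyOverC ?KZX.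
    - rewrite /P; apply: (leq_trans (size_polyD _ _)); rewrite geq_max.
      rewrite (leq_trans (sizeZX _ _)) // andbT.
      by rewrite (leq_trans (size_polyC_leq1 _)) //; lia.
    - by rewrite /P !hornerE.
  have cf t : P`_t = 0 by rewrite P0 coef0.
  have e1 : (0 == i)%N = false by apply/eqP; lia.
  have := cf 0%N; have := cf i.
  rewrite /P !coefD !coefZ !coefXn !coefC !eqxx e1.
  have -> : (i == 0)%N = false by apply/eqP; lia.
  by rewrite !mulr0 !mulr1 !addr0 !add0r => -> ->.
Qed.

End Indep.
Section Pow.
Variables (F0 : finFieldType) (L : fieldExtType F0).
Local Notation T := (finvect_type L).

Lemma card_K (K : {vspace L}) : #|[pred x : T | (x : L) \in K]| = (#|F0| ^ \dim K)%N.
Proof. exact: (card_vspace (K : {vspace T})). Qed.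

Lemma card_T : #|T| = (#|F0| ^ \dim (fullv : {vspace L}))%N.
Proof. by rewrite -(card_vspacef (Vector.class (T : vectType F0))) card_vspace. Qed.

Lemma unitK_exp (K : {subfield L}) (w : L) : w \in K -> w != 0 ->
  w ^+ (#|F0| ^ \dim K - 1) = 1.
Proof.
  move=> Kw w0.
  pose B := [set x : T | ((x : L) \in K) && (x != 0)].
  have cB : #|B| = (#|F0| ^ \dim K - 1)%N.
    rewrite -card_K [in RHS](cardD1 (0 : T)).
    have H0 : ((0 : T) \in [pred x : T | (x : L) \in K]) = true by exact: mem0v.
    rewrite H0 add1n subn1 /=.
    by apply: eq_card => x; rewrite !inE andbC.
  pose wT : T := w.
  have inj : injective (fun x : T => wT * x) by apply: mulfI.
  have E := reindex_inj (op := *%R) (x := 1) inj (P := fun x => x \in B) (F := fun x : T => x).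
  have eB (x : T) : (wT * x \in B) = (x \in B).
    rewrite /B !inE mulf_eq0 (negbTE w0) /=; congr (_ && _).
    apply/idP/idP => H; last by rewrite rpredM.
    have Kw' : w^-1 \in K by rewrite memvV.
    by have := rpredM Kw' H; rewrite /wT mulKf.
  rewrite (eq_bigl _ _ eB) big_split /= prodr_const in E.
  have nz : \prod_(x in B) (x : T) != 0 by apply/prodf_neq0 => x; rewrite inE => /andP[].
  rewrite -cB; apply: (mulIf nz); rewrite mul1r; exact: (esym E).
Qed.

Lemma Kpow (K : {subfield L}) (xi w : L) :
  (#|F0| ^ \dim K - 1)%N.-primitive_root xi -> w \in K -> w != 0 -> exists m, w = xi ^+ m.
Proof.
  move=> pr Kw w0; have [i ->] := prim_rootP pr (unitK_exp Kw w0).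
  by exists i.
Qed.
End Pow.

Lemma expand (F0 : finFieldType) (L : fieldExtType F0) (u1 u2 v1 v2 U1 U2 W1 W2 e1 e2 g1 g2 : L) :
  (v1 + e2 * W1 * g2) * (u2 + e1 * U2 * g1) - (v2 + e2 * W2 * g2) * (u1 + e1 * U1 * g1) =
  (v1 * u2 - v2 * u1) + e1 * (U2 * v1 - U1 * v2) * g1 + e2 * (W1 * u2 - W2 * u1) * g2
  + e1 * e2 * (U2 * W1 - U1 * W2) * (g1 * g2).
Proof. ring. Qed.

Section Core.
Variables (F0 : finFieldType) (L : fieldExtType F0) (K : {subfield L}) (gamma : L) (r : nat).
Hypothesis Hdeg : adjoin_degree K gamma = r.
Local Notation Q := #|F0|.

Definition VV (eta : L) l := (linfun (fV eta gamma l) @: K)%VS.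

Lemma memVV eta l x : reflect (exists2 u, u \in K & x = fV eta gamma l u) (x \in VV eta l).
Proof. by apply: (iffP memv_imgP) => -[u Ku ->]; exists u => //; rewrite lfunE. Qed.

Lemma fV0 eta l u : eta \in K -> u \in K -> (0 < l < r)%N -> fV eta gamma l u = 0 -> u = 0.
Proof.
  move=> Ke Ku lr E; have [] := indep2 Hdeg (a := u) (b := eta * u ^+ Q) Ku _ lr E => //.
  by rewrite rpredM ?rpredX.
Qed.

Lemma fV_at0 eta l : fV eta gamma l 0 = 0.
Proof. by rewrite /fV expr0n gtn_eqF ?(ltn_trans _ (Q_gt1 F0)) // mulr0 mul0r addr0. Qed.

Lemma fV_t eta l t u : t ^+ Q = t -> fV eta gamma l (t * u) = t * fV eta gamma l u.
Proof. by move=> tQ; rewrite /fV exprMn tQ; ring. Qed.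

Lemma line_y (t y : L) : t \in 1%VS -> t * y \in <[y]>%VS.
Proof. by case/vlineP => c ->; rewrite mulr_algl memvZ // memv_line. Qed.

Lemma core eta1 eta2 l1 l2 al1 al2 :
  eta1 \in K -> eta1 != 0 -> eta2 \in K -> eta2 != 0 ->
  (0 < l1)%N -> (0 < l2)%N -> (l1 + l2 < r)%N -> al1 != 0 -> al2 != 0 ->
  (1 < \dim (scalev al1 (VV eta1 l1) :&: scalev al2 (VV eta2 l2)))%N ->
  [/\ l1 = l2, exists2 w, (w \in K) && (w != 0) & eta1 = eta2 * w ^+ Q.-1
     & eta1 = eta2 -> exists2 c, c \in 1%VS & al1 = al2 * c].
Proof.
  move=> K1 n1 K2 n2 l10 l20 lr a10 a20 dimI.
  set I := (_ :&: _)%VS in dimI.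
  have I0 : I != 0%VS by rewrite -dimv_eq0 -lt0n (ltn_trans _ dimI).
  set y2 := vpick I.
  have y2I : y2 \in I := memv_pick I.
  have y20 : y2 != 0 by rewrite vpick0.
  have : has (fun v => v \notin <[y2]>%VS) (vbasis I).
    apply/negPn/negP => /hasPn H.
    have sI : (<<vbasis I>> <= <[y2]>)%VS.
      by apply/span_subvP => v /H; rewrite negbK.
    rewrite (span_basis (vbasisP I)) in sI.
    by move: (dimvS sI); rewrite dim_vline y20; lia.
  case/hasP => y1 /vbasis_mem y1I y1n.
  move: y1I y2I; rewrite !memv_cap.
  case/andP => /mem_scalev[b1 /memVV[u1 Ku1 ->] Ey1a] /mem_scalev[c1 /memVV[v1 Kv1 ->] Ey1b].
  case/andP => /mem_scalev[b2 /memVV[u2 Ku2 ->] Ey2a] /mem_scalev[c2 /memVV[v2 Kv2 ->] Ey2b].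
  have lr1 : (0 < l1 < r)%N by rewrite l10 (leq_ltn_trans (leq_addr l2 l1) lr).
  have lr2 : (0 < l2 < r)%N by rewrite l20 (leq_ltn_trans (leq_addl l1 l2) lr).
  have a2n : fV eta1 gamma l1 u2 != 0 by apply: contra y20; rewrite Ey2a => /eqP ->; rewrite mulr0.
  have x2n : fV eta2 gamma l2 v2 != 0 by apply: contra y20; rewrite Ey2b => /eqP ->; rewrite mulr0.
  have u2n : u2 != 0 by apply: contra a2n => /eqP ->; rewrite fV_at0.
  have v2n : v2 != 0 by apply: contra x2n => /eqP ->; rewrite fV_at0.
  have key : fV eta2 gamma l2 v1 * fV eta1 gamma l1 u2 - fV eta2 gamma l2 v2 * fV eta1 gamma l1 u1 = 0.
    have H : al1 * al2 * (fV eta2 gamma l2 v1 * fV eta1 gamma l1 u2 - fV eta2 gamma l2 v2 * fV eta1 gamma l1 u1)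
       = (al2 * fV eta2 gamma l2 v1) * (al1 * fV eta1 gamma l1 u2)
         - (al1 * fV eta1 gamma l1 u1) * (al2 * fV eta2 gamma l2 v2) by ring.
    rewrite -Ey1a -Ey1b -Ey2a -Ey2b subrr in H.
    by move/eqP: H; rewrite !mulf_eq0 (negbTE a10) (negbTE a20) /= => /eqP.
  rewrite /fV expand -exprD in key.
  set t := v1 / v2.
  have ht : v1 = t * v2 by rewrite /t divfK.
  clearbody t.
  have tcontr : t ^+ Q = t -> False.
    move=> tQ; move/negP: y1n; apply; rewrite Ey1b ht fV_t // mulrCA -Ey2b.
    by apply: line_y; apply/mem1_frob.
  have KA : v1 * u2 - v2 * u1 \in K by rewrite rpredB ?rpredM.
  have KB : eta1 * (u2 ^+ Q * v1 - u1 ^+ Q * v2) \in K by rewrite rpredM ?rpredB ?rpredM ?rpredX.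
  have KC : eta2 * (v1 ^+ Q * u2 - v2 ^+ Q * u1) \in K by rewrite rpredM ?rpredB ?rpredM ?rpredX.
  have KD : eta1 * eta2 * (u2 ^+ Q * v1 ^+ Q - u1 ^+ Q * v2 ^+ Q) \in K by rewrite !rpredM ?rpredB ?rpredM ?rpredX.
  have hu : forall A0 : v1 * u2 - v2 * u1 = 0, u1 = t * u2.
    move=> A0; move/eqP: A0; rewrite subr_eq0 ht => /eqP E.
    by apply: (mulIf v2n); rewrite -mulrA mulrC -E; ring.
  have [l12 | l12] := eqVneq l1 l2; last first.
    exfalso.
    have [A0 B0] : v1 * u2 - v2 * u1 = 0 /\ eta1 * (u2 ^+ Q * v1 - u1 ^+ Q * v2) = 0.
      move: l12; rewrite neq_ltn => /orP[lt|lt].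
        by have [-> -> _ _] := indep4 Hdeg KA KB KC KD (i:=l1) (j:=l2) (h:=(l1+l2)%N) ltac:(clear -l10 l20 lr lt; lia) ltac:(clear -l10 l20 lr lt; lia) key.
      rewrite -(addrA (v1 * u2 - v2 * u1)) [_ * gamma ^+ l1 + _]addrC addrA in key.
      by have [-> _ -> _] := indep4 Hdeg KA KC KB KD (i:=l2) (j:=l1) (h:=(l1+l2)%N) ltac:(clear -l10 l20 lr lt; lia) ltac:(clear -l10 l20 lr lt; lia) key.
    apply: tcontr; move/eqP: B0; rewrite mulf_eq0 (negbTE n1) /= subr_eq0 (hu A0) ht exprMn => /eqP E.
    have nz : u2 ^+ Q * v2 != 0 by rewrite mulf_neq0 ?expf_neq0.
    apply: (mulIf nz); apply/eqP; rewrite -subr_eq0; apply/eqP.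
    transitivity (t ^+ Q * u2 ^+ Q * v2 - u2 ^+ Q * (t * v2)); first by ring.
    by rewrite E subrr.
  subst l2.
  rewrite -(addrA (v1 * u2 - v2 * u1)) -mulrDl in key.
  have [A0 BC0 _] := indep3 Hdeg KA (rpredD KB KC) KD (i:=l1) (h:=(l1+l1)%N) ltac:(clear -l10 lr; lia) ltac:(clear -l10 lr; lia) key.
  have {}BC0 : (t - t ^+ Q) * (eta1 * u2 ^+ Q * v2 - eta2 * v2 ^+ Q * u2) = 0.
    by rewrite -BC0 (hu A0) ht !exprMn; ring.
  move/eqP: BC0; rewrite mulf_eq0 => /orP[]; first by rewrite subr_eq0 => /eqP tQ; case: tcontr.
  rewrite subr_eq0 => /eqP H1.
  set w := v2 / u2.
  have hw : v2 = w * u2 by rewrite /w divfK.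
  have wn : w != 0 by rewrite /w mulf_neq0 ?invr_eq0.
  have Kw : w \in K by rewrite /w rpredM // memvV.
  clearbody w.
  have Qn : Q = Q.-1.+1 by rewrite prednK // (ltn_trans _ (Q_gt1 F0)).
  have nz : w * u2 ^+ Q * u2 != 0 by rewrite !mulf_neq0 ?expf_neq0.
  move: H1; rewrite hw exprMn => H1.
  have wQ : w ^+ Q = w ^+ Q.-1 * w by rewrite -exprSr -Qn.
  split => //.
    exists w; first by rewrite Kw wn.
    apply: (mulIf nz).
    transitivity (eta1 * u2 ^+ Q * (w * u2)); first by ring.
    by rewrite H1 wQ; ring.
  move=> e12; subst eta2.
  have wQ' : w ^+ Q = w.
    have nz2 : eta1 * u2 ^+ Q * u2 != 0 by rewrite !mulf_neq0 ?expf_neq0.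
    apply: (mulIf nz2).
    transitivity (eta1 * (w ^+ Q * u2 ^+ Q) * u2); first by ring.
    by rewrite -H1; ring.
  exists w; first exact/mem1_frob.
  apply: (mulIf a2n); rewrite -Ey2a Ey2b hw fV_t //; ring.
Qed.
End Core.

Lemma ebound (r l l' : nat) : (l < ((r + 1) %/ 2).-1)%N -> (l' < ((r + 1) %/ 2).-1)%N ->
  (l.+1 + l'.+1 < r)%N.
Proof. lia. Qed.

Lemma dist_bound (a b d k : nat) : a = k -> b = k -> (d <= 1)%N ->
  (2 * k - 2 <= a + b - 2 * d)%N.
Proof. lia. Qed.

Lemma dist_eq (a b d k : nat) : a = k -> b = k -> d = 1%N ->
  (a + b - 2 * d = 2 * k - 2)%N.
Proof. lia. Qed.

Lemma e_pos (r : nat) : (2 < r)%N -> (0 < ((r + 1) %/ 2).-1)%N.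
Proof. lia. Qed.

Theorem lemma3p3 (F0 : finFieldType) (L : fieldExtType F0) (q k r : nat)
  (K : {subfield L}) (xi gamma : L) (eta : 'I_q.-1 -> L) :
  #|F0| = q ->
  (2 <= k)%N -> (2 < r)%N ->
  \dim (fullv : {vspace L}) = (r * k)%N ->
  \dim K = k ->
  xi \in K -> (q ^ k - 1)%N.-primitive_root xi ->
  (exists p : {poly L}, [/\ irreducible_over K p, size p = r.+1 & root p gamma]) ->
  (forall j, eta j \in K /\ eta j != 0) ->
  (forall j j', j != j' -> forall m : nat, eta j != eta j' * xi ^+ (q.-1 * m)) ->
  let e := ((r + 1) %/ 2).-1 in
  let V := fun (j : 'I_q.-1) (l : 'I_e) => Vsp K q (eta j) gamma l.+1 in
  let inC := fun W : {vspace L} =>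
    exists (j : 'I_q.-1) (l : 'I_e) (a : L), a != 0 /\ W = scalev a (V j l) in
  [/\ (forall j l x, x \in V j l <-> exists2 u, u \in K & x = u + eta j * u ^+ q * gamma ^+ l.+1),
      (forall W a, inC W -> a != 0 -> inC (scalev a W)),
      (forall W, inC W -> \dim W = k),
      (exists s : seq {vspace L},
          [/\ uniq s, (forall W, W \in s <-> inC W) & size s = (e * (q ^ (r * k) - 1))%N]) &
      (exists W1 W2, [/\ inC W1, inC W2, W1 != W2 & subspace_dist W1 W2 = (2 * k - 2)%N]) /\
      (forall W1 W2, inC W1 -> inC W2 -> W1 != W2 -> (2 * k - 2 <= subspace_dist W1 W2)%N)].
Proof.
  move=> Hq k2 r2 dimL dimK Kxi prxi [p [irrp sp rp]] Heta Heta2 e V inC.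
  subst q.
  have Hdeg := adj_deg irrp sp rp.
  have q1 : (0 < #|F0|.-1)%N by rewrite -subn1 subn_gt0 (Q_gt1 F0).
  have Ve j l : V j l = VV K gamma (eta j) l.+1 by rewrite /V VspE.
  have lb (l l' : 'I_e) : (l.+1 + l'.+1 < r)%N by apply: ebound.
  have lr (l : 'I_e) : (0 < l.+1 < r)%N.
    by have := lb l l; rewrite ltn0Sn /=; apply: leq_trans; rewrite ltnS leq_addr.
  have dimV j l : \dim (V j l) = k.
    rewrite Ve /VV limg_dim_eq ?dimK //.
    apply/eqP; rewrite -subv0; apply/subvP => x; rewrite memv_cap memv_ker lfunE.
    case/andP => Kx /eqP fx; rewrite memv0; apply/eqP.
    by apply: (fV0 Hdeg _ Kx (lr l) fx); case: (Heta j).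
  have dimC W : inC W -> \dim W = k.
    by case=> j [l [a [a0 ->]]]; rewrite dim_scalev.
  have same j1 j2 l1 l2 a1 a2 : a1 != 0 -> a2 != 0 ->
      (1 < \dim (scalev a1 (V j1 l1) :&: scalev a2 (V j2 l2)))%N ->
      [/\ j1 = j2, l1 = l2 & exists2 c, c \in 1%VS & a1 = a2 * c].
    move=> a10 a20; rewrite !Ve => dI.
    have [K1 n1] := Heta j1; have [K2 n2] := Heta j2.
    have [l12 [w /andP[Kw wn] Ew] Hc] := core Hdeg K1 n1 K2 n2 (ltn0Sn l1) (ltn0Sn l2) (lb l1 l2) a10 a20 dI.
    have prxi' : (#|F0| ^ \dim K - 1)%N.-primitive_root xi by rewrite dimK.
    have [m wm] := Kpow prxi' Kw wn.
    have j12 : j1 = j2.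
      apply/eqP; apply: contraT => nj; have := Heta2 _ _ nj m.
      by rewrite Ew wm -exprM mulnC eqxx.
    subst j2; split => //; first exact: ord_inj (succn_inj l12).
    exact: Hc.
  have caple W1 W2 : inC W1 -> inC W2 -> W1 != W2 -> (\dim (W1 :&: W2) <= 1)%N.
    case=> j1 [l1 [a1 [a10 ->]]] [j2 [l2 [a2 [a20 ->]]]] neq.
    rewrite leqNgt; apply/negP => dI.
    have [ej el [c c1 ec]] := same _ _ _ _ _ _ a10 a20 dI.
    subst j2 l2 a1.
    have c0 : c != 0 by apply: contraNneq a10 => ->; rewrite mulr0.
    move/negP: neq; apply; apply/eqP.
    by rewrite -scalevM (scalev1 _ c1 c0).
  split.
  - move=> j l x; rewrite Ve; split => [/memVV[u Ku ->]|[u Ku ->]]; first by exists u.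
    by apply/memVV; exists u.
  - move=> W a [j [l [b [b0 ->]]]] a0; exists j, l, (a * b).
    by split; [rewrite mulf_neq0 | rewrite scalevM].
  - exact: dimC.
  - pose T := finvect_type L.
    pose I := ('I_#|F0|.-1 * 'I_e * T)%type.
    pose A := [set x : I | x.2 != 0].
    pose F (x : I) := scalev x.2 (V x.1.1 x.1.2).
    pose G (W : {vspace L}) := [set y : T | (y : L) \in W].
    pose H (Y : {set T}) := (<<[seq (y : L) | y : T <- enum Y]>>)%VS.
    have HG W : H (G W) = W.
      apply/vspaceP => x; apply/idP/idP => [|Wx].
        have sub : (<<[seq (y : L) | y : T <- enum (G W)]>> <= W)%VS.
          by apply/span_subvP => y /mapP[z]; rewrite mem_enum inE => Hz ->.
        exact: (subvP sub x).
      apply: memv_span; apply/mapP; exists (x : T) => //.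
      by rewrite mem_enum inE.
    pose Y := [set G (F x) | x in A].
    exists [seq H y | y <- enum Y]; split.
    + rewrite map_inj_in_uniq ?enum_uniq // => y1 y2.
      by rewrite !mem_enum => /imsetP[x1 _ ->] /imsetP[x2 _ ->]; rewrite !HG => ->.
    + move=> W; split.
        case/mapP => y; rewrite mem_enum => /imsetP[x Ax ->] ->; rewrite HG.
        by exists x.1.1, x.1.2, x.2; split => //; move: Ax; rewrite inE.
      case=> j [l [a [a0 ->]]]; apply/mapP; exists (G (F (j, l, a))).
        by rewrite mem_enum; apply/imsetP; exists ((j, l, a) : I); rewrite ?inE.
      by rewrite HG.
    + rewrite size_map -cardE.
      have cA : #|A| = (#|F0|.-1 * e * (#|F0| ^ (r * k)).-1)%N.
        have -> : A = setX [set: 'I_#|F0|.-1 * 'I_e] [set~ (0 : T)].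
          by apply/setP => -[x y]; rewrite !inE.
        by rewrite cardsX cardsT card_prod !card_ord cardsC1 card_T dimL.
      have fib y : y \in Y -> #|[set x in A | G (F x) == y]| = #|F0|.-1.
        case/imsetP => x0 Ax0 ->.
        pose C1 := [set c : T | ((c : L) \in 1%VS) && (c != 0)].
        have cC1 : #|C1| = #|F0|.-1.
          have c1 : #|[pred x : T | (x : L) \in (1%VS : {vspace L})]| = #|F0| by rewrite card_K dimv1 expn1.
          rewrite -c1 [in RHS](cardD1 (0 : T)).
          have H0 : ((0 : T) \in [pred x : T | (x : L) \in 1%VS]) = true by exact: mem0v.
          rewrite H0 add1n /=.
          by apply: eq_card => x; rewrite !inE andbC.
        have x02 : x0.2 != 0 by move: Ax0; rewrite inE.
        have -> : [set x in A | G (F x) == G (F x0)] = [set ((x0.1, c * x0.2) : I) | c in C1].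
          apply/setP => x; rewrite !inE; apply/andP/imsetP.
            case=> x2n /eqP /(congr1 H); rewrite !HG => Fx.
            have dI : (1 < \dim (F x :&: F x0))%N by rewrite Fx capvv /F dim_scalev // dimV.
            have [ej el [c c1 ec]] := same _ _ _ _ _ _ x2n x02 dI.
            have c0 : c != 0 by apply: contraNneq x2n => cz; rewrite ec cz mulr0.
            exists c; first by rewrite inE c1 c0.
            move: x ej el ec x2n Fx dI => [[j l] a] /= -> -> -> _ _ _.
            by congr (_, _); [case: (x0.1) | exact: mulrC].
          case=> c; rewrite inE => /andP[c1 c0] ->; split; first by rewrite /= mulf_neq0.
          by apply/eqP; congr G; rewrite /F /= -scalevM scalev1.
        rewrite card_imset // => c1 c2 /= [] /(mulIf x02).
        done.
      have cY : #|A| = (#|Y| * #|F0|.-1)%N.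
        rewrite -sum1_card (partition_big_imset (fun x => G (F x))) /= -/Y.
        rewrite -sum_nat_const; apply: eq_bigr => y Yy.
        transitivity #|[set x in A | G (F x) == y]|; last exact: fib.
        by rewrite -sum1_card; apply: eq_bigl => x; rewrite inE.
      move: cY; rewrite cA [in RHS]mulnC -mulnA => /eqP; rewrite eqn_pmul2l //.
      by rewrite subn1 => /eqP.
  split; last first.
    move=> W1 W2 C1 C2 neq; rewrite /subspace_dist.
    exact: dist_bound (dimC _ C1) (dimC _ C2) (caple _ _ C1 C2 neq).
  pose j0 : 'I_#|F0|.-1 := Ordinal q1.
  pose l0 : 'I_e := Ordinal (e_pos r2).
  have : has (fun v => v \notin 1%VS) (vbasis K).
    apply/negPn/negP => /hasPn H.
    have sI : (<<vbasis K>> <= 1)%VS.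
      by apply/span_subvP => v /H; rewrite negbK.
    rewrite (span_basis (vbasisP K)) in sI.
    by move: (dimvS sI); rewrite dimv1 dimK => k1; move: (leq_trans k2 k1).
  case/hasP => w0 /vbasis_mem Kw0 w01.
  have w00 : w0 != 0 by apply: contraNneq w01 => ->; rewrite mem0v.
  have [Ke0 ne0] := Heta j0.
  have f0 u : u \in K -> u != 0 -> fV (eta j0) gamma l0.+1 u != 0.
    by move=> Ku; apply: contra => /eqP fu; apply/eqP; apply: (fV0 Hdeg Ke0 Ku (lr l0) fu).
  set a := fV (eta j0) gamma l0.+1 1.
  set b := fV (eta j0) gamma l0.+1 w0.
  have a0 : a != 0 by apply: f0; rewrite ?mem1v ?oner_neq0.
  have b0 : b != 0 by apply: f0.
  set al := a / b.
  have al0 : al != 0 by rewrite mulf_neq0 ?invr_eq0.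
  have aV : a \in V j0 l0 by rewrite Ve; apply/memVV; exists 1; rewrite ?mem1v.
  have bV : b \in V j0 l0 by rewrite Ve; apply/memVV; exists w0.
  have C1 : inC (scalev 1 (V j0 l0)) by exists j0, l0, 1; rewrite oner_neq0.
  have C2 : inC (scalev al (V j0 l0)) by exists j0, l0, al.
  have neq : scalev 1 (V j0 l0) != scalev al (V j0 l0).
    apply/negP => /eqP E.
    have dI : (1 < \dim (scalev 1 (V j0 l0) :&: scalev al (V j0 l0)))%N.
      by rewrite -E capvv (dimC _ C1).
    have [_ _ [c c1 ec]] := same _ _ _ _ _ _ (oner_neq0 L) al0 dI.
    have c0 : c != 0 by apply/eqP => cz; move: ec; rewrite cz mulr0 => /eqP; rewrite oner_eq0.
    have alc : al = c^-1 by apply: (mulIf c0); rewrite -ec mulVf.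
    have al1 : al \in 1%VS by rewrite alc memvV.
    have alQ : al ^+ #|F0| = al by apply/mem1_frob.
    have E2 : fV (eta j0) gamma l0.+1 (al * w0 - 1) = 0.
      by rewrite raddfB /= fV_t // -/a -/b /al divfK // subrr.
    have Kx : al * w0 - 1 \in K by rewrite rpredB ?mem1v // rpredM // (subvP (sub1v K)).
    have := fV0 Hdeg Ke0 Kx (lr l0) E2; move/eqP; rewrite subr_eq0 => /eqP aw.
    move/negP: w01; apply.
    have -> : w0 = al^-1 by apply: (mulIf al0); rewrite mulVf // mulrC aw.
    by rewrite memvV.
  have d1 : \dim (scalev 1 (V j0 l0) :&: scalev al (V j0 l0)) = 1%N.
    apply/eqP; rewrite eqn_leq caple //= lt0n dimv_eq0; apply/negP => /eqP I0.
    have : a \in (scalev 1 (V j0 l0) :&: scalev al (V j0 l0))%VS.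
      rewrite memv_cap; apply/andP; split; apply/mem_scalev.
        by exists a; rewrite ?mul1r.
      by exists b; rewrite // /al divfK.
    by rewrite I0 memv0 (negbTE a0).
  exists (scalev 1 (V j0 l0)), (scalev al (V j0 l0)); split => //.
  by rewrite /subspace_dist; apply: dist_eq (dimC _ C1) (dimC _ C2) d1.
Qed.
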